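(* Let $T$ be the theory of the Rado graph in $\mathcal{L}=\{R\}$, $\mathcal{U}$ a monster model of $T$ and $M\prec\mathcal{U}$ a countable elementary substructure, and let $W$ be a Borel graphon. Then the function $\mu_W$ defined below is an $M$-invariant Keisler measure on $\mathcal{L}_x(\mathcal{U})$; moreover, $\mu_W$ does not concentrate on points (i.e. $\mu_W(x=a)=0$ for all $a\in\mathcal{U}$).
   Context: A graphon is a measurable symmetric $W\colon[0,1]^2\to[0,1]$; Borel if Borel measurable. $\mathfrak{m}$ is Lebesgue measure on $[0,1]$. $S^{*}_x(M)$ is the set of types in $S_x(M)$ not realized in $M$. $\lambda$ is the Keisler measure on $\mathcal{L}_x(\mathcal{U})$ with $\lambda(\bigwedge_{i\le n}R(x,a_i)\wedge\bigwedge_{j\le m}\neg R(x,b_j))=2^{-(n+m)}$ for distinct $a_i,b_j\in\mathcal{U}$; its restriction to $M$ is regarded as a Borel probability measure on $S^{*}_x(M)$. Fix an isomorphism of measure spaces $F\colon(S^{*}_x(M),\lambda)\to([0,1],\mathfrak{m})$ and write $W(p,q)=W(F(p),F(q))$ for $p,q\in S^{*}_x(M)$. A basic formula is $\varphi(x)=\bigwedge_{a\in A}R(x,a)\wedge\bigwedge_{b\in B}\neg R(x,b)\wedge\bigwedge_{c\in C}R(x,c)\wedge\bigwedge_{d\in D}\neg R(x,d)\wedge E(x)$ with $A,B\subseteq M$ finite disjoint, $C,D\subseteq\mathcal{U}\setminus M$ finite disjoint, and $E(x)$ a formula in the language of equality with parameters from $\mathcal{U}$; it is trivial if $E(x)$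 implies $x$ lies in a finite subset of $\mathcal{U}$. Define $\mu_W(\varphi)=0$ if $\varphi$ is trivial and otherwise $\mu_W(\varphi)=\int_{p\in S^{*}_x(M)}\mathbf{1}_{\psi_A\wedge\psi_B}(p)\prod_{c\in C}W(p,\operatorname{tp}(c/M))\prod_{d\in D}(1-W(p,\operatorname{tp}(d/M)))\,d\lambda$, where $\psi_A=\bigwedge_{a\in A}R(x,a)$, $\psi_B=\bigwedge_{b\in B}\neg R(x,b)$; $\mu_W$ is extended to arbitrary formulas by writing them (via quantifier elimination) as finite disjoint unions of basic formulas and adding. A Keisler measure on $\mathcal{L}_x(\mathcal{U})$ is a finitely additive probability measure on formulas modulo equivalence; it is $M$-invariant if $\mu(\varphi(x,\bar a))=\mu(\varphi(x,\bar b))$ for all $\mathcal{L}$-formulas $\varphi$ and $\bar a\equiv_M\bar b$. *)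

(* Defs.v *)
From HB Require Import structures.
From mathcomp Require Import all_boot all_order all_algebra.
From mathcomp Require Import all_classical all_reals all_analysis.
From Stdlib Require List.
Set Implicit Arguments. Unset Strict Implicit. Unset Printing Implicit Defensive.
Import Order.TTheory GRing.Theory Num.Theory.
Local Open Scope classical_set_scope.
Local Open Scope ring_scope.

(* Variables are named by natural numbers; the distinguished free variable *)
(* x is variable 0.  Parameters (constants) range over a type P.           *)

Inductive term (P : Type) := TVar of nat | TPar of P.
Arguments TVar {P}.
Arguments TPar {P}.

Inductive lform (P : Type) :=
| FRel of term P & term P
| FEq of term P & term P
| FFalse
| FNeg of lform P
| FAnd of lform P & lform P
| FEx of nat & lform P.
Arguments FFalse {P}.

Definition FTop {P} : lform P := FNeg FFalse.
Definition FOr {P} (f g : lform P) : lform P := FNeg (FAnd (FNeg f) (FNeg g)).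
Definition bigAnd {P} (l : list (lform P)) : lform P := foldr (@FAnd P) FTop l.

Definition vx {P} : term P := TVar 0.

Definition tmap P Q (f : P -> Q) (t : term P) : term Q :=
  match t with TVar n => TVar n | TPar p => TPar (f p) end.

Fixpoint fmap P Q (f : P -> Q) (phi : lform P) : lform Q :=
  match phi with
  | FRel t s => FRel (tmap f t) (tmap f s)
  | FEq t s => FEq (tmap f t) (tmap f s)
  | FFalse => FFalse
  | FNeg g => FNeg (fmap f g)
  | FAnd g h => FAnd (fmap f g) (fmap f h)
  | FEx n g => FEx n (fmap f g)
  end.

Definition tvar_is P (k : nat) (t : term P) : Prop :=
  match t with TVar n => n = k | TPar _ => False end.

Fixpoint free P (k : nat) (phi : lform P) : Prop :=
  match phi with
  | FRel t s | FEq t s => tvar_is k t \/ tvar_is k s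
  | FFalse => False
  | FNeg g => free k g
  | FAnd g h => free k g \/ free k h
  | FEx n g => n <> k /\ free k g
  end.

Definition onlyx P (phi : lform P) : Prop := forall k, free k phi -> k = 0%N.
Definition closed P (phi : lform P) : Prop := forall k, ~ free k phi.

Definition tpar_in P (A : set P) (t : term P) : Prop :=
  match t with TVar _ => True | TPar p => A p end.

Fixpoint params_in P (A : set P) (phi : lform P) : Prop :=
  match phi with
  | FRel t s | FEq t s => tpar_in A t /\ tpar_in A s
  | FFalse => True
  | FNeg g => params_in A g
  | FAnd g h => params_in A g /\ params_in A h
  | FEx _ g => params_in A g
  end.

Fixpoint no_rel P (phi : lform P) : Prop :=
  match phi with
  | FRel _ _ => False
  | FEq _ _ | FFalse => True
  | FNeg g => no_rel g
  | FAnd g h => no_rel g /\ no_rel h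
  | FEx _ g => no_rel g
  end.

(* Tarski semantics in an L-structure (U, Rel), quantifiers relativised  *)
(* to a domain D (D = setT for U itself, D = M for a substructure M).     *)
Section Semantics.
Variables (U : Type) (Rel : U -> U -> Prop).

Definition upd (v : nat -> U) (n : nat) (a : U) : nat -> U :=
  fun k => if k == n then a else v k.

Definition teval (v : nat -> U) (t : term U) : U :=
  match t with TVar n => v n | TPar a => a end.

Fixpoint sat_in (D : set U) (v : nat -> U) (phi : lform U) : Prop :=
  match phi with
  | FRel t s => Rel (teval v t) (teval v s)
  | FEq t s => teval v t = teval v s
  | FFalse => False
  | FNeg g => ~ sat_in D v g
  | FAnd g h => sat_in D v g /\ sat_in D v h
  | FEx n g => exists a, D a /\ sat_in D (upd v n a) g
  end.

Definition sat := sat_in setT.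

Definition realizes (c : U) (phi : lform U) : Prop := sat (fun _ => c) phi.

Definition defset (phi : lform U) : set U := [set c | realizes c phi].

(* U is a model of T = Th(Rado graph): symmetric, irreflexive, and the     *)
(* extension axioms (which axiomatise the complete theory T).              *)
Definition rado_model : Prop :=
  (forall a b, Rel a b -> Rel b a) /\
  (forall a, ~ Rel a a) /\
  (forall A B : list U, (forall a, List.In a A -> ~ List.In a B) ->
     exists c, ~ List.In c A /\ ~ List.In c B /\
       (forall a, List.In a A -> Rel c a) /\ (forall b, List.In b B -> ~ Rel c b)).

Definition elementary_sub (M : set U) : Prop :=
  forall (phi : lform U) (v : nat -> U), params_in M phi -> (forall k, M (v k)) ->
    (sat_in M v phi <-> sat v phi).

Definition fin_sat (S : set (lform U)) : Prop :=
  forall l : list (lform U), (forall phi, List.In phi l -> S phi) ->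
    exists c, forall phi, List.In phi l -> realizes c phi.

Definition small (A : set U) : Prop :=
  ~ exists f : {a : U | A a} -> U, forall u, exists y, f y = u.

Definition saturated : Prop :=
  forall (A : set U) (S : set (lform U)), small A ->
    (forall phi, S phi -> onlyx phi /\ params_in A phi) ->
    fin_sat S -> exists c, forall phi, S phi -> realizes c phi.

Variable M : set U.

Definition LxM (phi : lform U) : Prop := onlyx phi /\ params_in M phi.

Definition tp (c : U) : set (lform U) := [set phi | LxM phi /\ realizes c phi].

Definition is_type (p : set (lform U)) : Prop :=
  (forall phi, p phi -> LxM phi) /\
  (forall phi, LxM phi -> p phi \/ p (FNeg phi)) /\
  fin_sat p.

Definition realized_in_M (p : set (lform U)) : Prop := exists a, M a /\ p = tp a.

Definition Sstar : set (set (lform U)) := [set p | is_type p /\ ~ realized_in_M p].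

Definition clopen (phi : lform U) : set (set (lform U)) := [set p | Sstar p /\ p phi].

(* Borel sigma-algebra of S*_x(M): generated by the clopens [phi], phi in   *)
(* L_x(M) (viewed inside the ambient type of all sets of formulas; the     *)
(* complement of S*_x(M) is an atom of this sigma-algebra).                *)
Definition clopens : set (set (set (lform U))) := [set clopen phi | phi in LxM].

Definition TypeSpace : measurableType _ := g_sigma_algebraType clopens.

Definition SstarT : set TypeSpace := Sstar.
Definition clopenT (phi : lform U) : set TypeSpace := clopen phi.
Definition tpT (c : U) : TypeSpace := tp c.

End Semantics.
Arguments TypeSpace {U} Rel M.
Arguments SstarT {U} Rel M.
Arguments clopenT {U} Rel M phi.
Arguments tpT {U} Rel M c.
Arguments Sstar {U} Rel M.
Arguments clopen {U} Rel M phi.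
Arguments tp {U} Rel M c.

Definition Rx U (a : U) : lform U := FRel vx (TPar a).
Definition nRx U (a : U) : lform U := FNeg (FRel vx (TPar a)).

Section Measures.
Variables (R : realType) (U : Type) (Rel : U -> U -> Prop) (M : set U).
Local Notation TS := (TypeSpace Rel M).

Definition is_lambda (lam : {measure set TS -> \bar R}) : Prop :=
  lam (~` SstarT Rel M) = 0%E /\
  forall A B : list U, List.NoDup A -> List.NoDup B -> (forall a, List.In a A -> ~ List.In a B) ->
    (forall a, List.In a A -> M a) -> (forall b, List.In b B -> M b) ->
    lam (clopenT Rel M (bigAnd (map (@Rx U) A ++ map (@nRx U) B)))
      = ((2%:R ^-1) ^+ (size A + size B))%:E.

(* F : (S*_x(M), lambda) -> ([0,1], Lebesgue) is an isomorphism of measure  *)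
(* spaces: a bijection, measurable with measurable inverse, and measure     *)
(* preserving.  (F is given on all sets of formulas; only its values on     *)
(* S*_x(M) matter.)                                                         *)
Definition measure_iso (lam : {measure set TS -> \bar R}) (F : TS -> R) : Prop :=
  (forall p, SstarT Rel M p -> `[0, 1]%classic (F p)) /\
  {in SstarT Rel M &, injective F} /\
  (forall r, `[0, 1]%classic r -> exists2 p, SstarT Rel M p & F p = r) /\
  measurable_fun (SstarT Rel M) F /\
  (forall A : set TS, measurable A -> A `<=` SstarT Rel M ->
     measurable (F @` A)) /\
  (forall B : set R, measurable B ->
     lam (SstarT Rel M `&` F @^-1` B) = lebesgue_measure (B `&` `[0, 1]%classic)).

Definition borel_graphon (W : R -> R -> R) : Prop :=
  (forall s t, `[0, 1]%classic s -> `[0, 1]%classic t -> W s t = W t s) /\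
  (forall s t, `[0, 1]%classic s -> `[0, 1]%classic t -> 0 <= W s t <= 1) /\
  measurable_fun (`[0, 1]%classic `*` `[0, 1]%classic : set (R * R)) (fun st : R * R => W st.1 st.2).

End Measures.

Section Keisler.
Variables (R : realType) (U : Type) (Rel : U -> U -> Prop).

Definition keisler_measure (mu : lform U -> R) : Prop :=
  (forall phi psi, onlyx phi -> onlyx psi ->
     defset Rel phi = defset Rel psi -> mu phi = mu psi) /\
  (forall phi, onlyx phi -> 0 <= mu phi) /\
  mu FTop = 1 /\
  (forall phi psi, onlyx phi -> onlyx psi ->
     defset Rel phi `&` defset Rel psi = set0 ->
     mu (FOr phi psi) = mu phi + mu psi).

(* instantiation of the placeholders y_i of an L-formula phi(x, y) *)
Definition inst n (a : 'I_n -> U) : U + 'I_n -> U :=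
  fun s => match s with inl u => u | inr i => a i end.

Definition in_M_or_var n (M : set U) : set (U + 'I_n) :=
  fun s => match s with inl u => M u | inr _ => True end.

Definition same_type_over n (M : set U) (a b : 'I_n -> U) : Prop :=
  forall (psi : lform (U + 'I_n)) (v : nat -> U),
    closed psi -> params_in (@in_M_or_var n M) psi ->
    (sat Rel v (fmap (inst a) psi) <-> sat Rel v (fmap (inst b) psi)).

(* M-invariance; L-formulas phi(x, y_0..y_{n-1}) are formulas whose only    *)
(* parameters are the placeholders y_i : 'I_n, and only free variable x.   *)
Definition M_invariant (M : set U) (mu : lform U -> R) : Prop :=
  forall n (phi : lform 'I_n) (a b : 'I_n -> U), onlyx phi ->
    same_type_over M a b -> mu (fmap a phi) = mu (fmap b phi).

End Keisler.

Definition basic U (A B C D : list U) (E : lform U) : lform U :=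
  bigAnd (map (@Rx U) A ++ map (@nRx U) B ++ map (@Rx U) C ++ map (@nRx U) D ++ [:: E]).

Definition basic_data U (M : set U) (A B C D : list U) (E : lform U) : Prop :=
  List.NoDup A /\ List.NoDup B /\ (forall a, List.In a A -> ~ List.In a B) /\
  (forall a, List.In a A -> M a) /\ (forall b, List.In b B -> M b) /\
  List.NoDup C /\ List.NoDup D /\ (forall c, List.In c C -> ~ List.In c D) /\
  (forall c, List.In c C -> ~ M c) /\ (forall d, List.In d D -> ~ M d) /\
  no_rel E /\ onlyx E.

Definition trivial_eq U (Rel : U -> U -> Prop) (E : lform U) : Prop :=
  exists S : list U, forall c, realizes Rel c E -> List.In c S.

Definition muW_basic (R : realType) U (Rel : U -> U -> Prop) (M : set U)
  (lam : {measure set (TypeSpace Rel M) -> \bar R}) (F : TypeSpace Rel M -> R)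
  (W : R -> R -> R) (A B C D : list U) (E : lform U) : \bar R :=
  if `[< trivial_eq Rel E >] then 0%E else
  (\int[lam]_(p in SstarT Rel M)
     (\1_(clopenT Rel M (bigAnd (map (@Rx U) A ++ map (@nRx U) B))) p
      * \prod_(c <- C) W (F p) (F (tpT Rel M c))
      * \prod_(d <- D) (1 - W (F p) (F (tpT Rel M d))))%:E)%E.

(* Main.v *)
Require Import Defs.
From HB Require Import structures.
From mathcomp Require Import all_boot all_order all_algebra.
From mathcomp Require Import all_classical all_reals all_analysis.
From mathcomp Require Import ring lra.
From Stdlib Require List Permutation.
Require Import Defs.
Import Order.TTheory GRing.Theory Num.Theory.
Local Open Scope classical_set_scope.
Local Open Scope ring_scope.

Lemma In_cat (T : Type) (x : T) (s1 s2 : seq T) :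
  List.In x (s1 ++ s2) <-> List.In x s1 \/ List.In x s2.
Proof.
elim: s1 => [|y s IH] /=; first by split=> [|[[]|]]//; right.
by rewrite IH; tauto.
Qed.

Lemma In_map (T T' : Type) (f : T -> T') (y : T') (s : seq T) :
  List.In y (map f s) <-> exists x, List.In x s /\ f x = y.
Proof.
elim: s => [|x s IH] /=; first by split=> [[]|[? []]].
rewrite IH; split.
- by case=> [<-|[z [? ?]]]; [exists x; tauto| exists z; tauto].
- by case=> z [[<-|?] ?]; [left|right; exists z].
Qed.

Definition tparams {P} (t : term P) : seq P :=
  match t with TVar _ => [::] | TPar p => [:: p] end.

Fixpoint params {P} (phi : lform P) : seq P :=
  match phi with
  | FRel t s | FEq t s => tparams t ++ tparams s
  | FFalse => [::]
  | FNeg g => params g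
  | FAnd g h => params g ++ params h
  | FEx _ g => params g
  end.

Lemma params_fmap P Q (f : P -> Q) phi : params (fmap f phi) = map f (params phi).
Proof.
elim: phi => //=.
- by case=> [?|?] [?|?].
- by case=> [?|?] [?|?].
- by move=> g -> h ->; rewrite map_cat.
Qed.

Lemma params_in_sub P (A B : set P) phi :
  (forall q, A q -> B q) -> params_in A phi -> params_in B phi.
Proof.
move=> AB; elim: phi => //=.
- by case=> [?|?] [?|?] /=; firstorder.
- by case=> [?|?] [?|?] /=; firstorder.
- by move=> g Hg h Hh [? ?]; split; auto.
Qed.

Lemma params_inP P (phi : lform P) : params_in (fun q => List.In q (params phi)) phi.
Proof.
elim: phi => /=.
- by case=> [?|?] [?|?] /=; rewrite ?In_cat /=; tauto.
- by case=> [?|?] [?|?] /=; rewrite ?In_cat /=; tauto.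
- by [].
- by [].
- move=> g Hg h Hh; split.
  + by apply: params_in_sub Hg => q; rewrite In_cat; left.
  + by apply: params_in_sub Hh => q; rewrite In_cat; right.
- by [].
Qed.

Lemma params_in_fmap P Q (f : P -> Q) (A : set Q) phi :
  params_in A (fmap f phi) <-> params_in (fun q => A (f q)) phi.
Proof.
elim: phi => //=.
- by case=> [?|?] [?|?].
- by case=> [?|?] [?|?].
- by move=> g Hg h Hh; rewrite Hg Hh.
Qed.

Lemma free_fmap P Q (f : P -> Q) k phi : free k (fmap f phi) <-> free k phi.
Proof.
elim: phi => //=.
- by case=> [?|?] [?|?].
- by case=> [?|?] [?|?].
- by move=> g Hg h Hh; rewrite Hg Hh.
- by move=> n g ->.
Qed.

Lemma fmap_comp P Q S (f : P -> Q) (g : Q -> S) phi :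
  fmap g (fmap f phi) = fmap (g \o f) phi.
Proof.
elim: phi => //=.
- by case=> [?|?] [?|?].
- by case=> [?|?] [?|?].
- by move=> ? ->.
- by move=> ? -> ? ->.
- by move=> ? ? ->.
Qed.

Lemma fmap_id P (phi : lform P) : fmap id phi = phi.
Proof.
elim: phi => //=.
- by case=> [?|?] [?|?].
- by case=> [?|?] [?|?].
- by move=> ? ->.
- by move=> ? -> ? ->.
- by move=> ? ? ->.
Qed.

Lemma fmap_ext P Q (f g : P -> Q) phi : f =1 g -> fmap f phi = fmap g phi.
Proof.
move=> fg; elim: phi => //=.
- by case=> [?|?] [?|?] /=; rewrite ?fg.
- by case=> [?|?] [?|?] /=; rewrite ?fg.
- by move=> ? ->.
- by move=> ? -> ? ->.
- by move=> ? ? ->.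
Qed.

Section Coinc.
Variables (U : Type) (Rel : U -> U -> Prop).

Lemma sat_coinc (phi : lform U) : forall v v',
  (forall k, free k phi -> v k = v' k) -> (sat Rel v phi <-> sat Rel v' phi).
Proof.
rewrite /sat.
elim: phi => /=.
- by case=> [n|a] [m|b] v v' H /=; rewrite ?H //=; auto.
- by case=> [n|a] [m|b] v v' H /=; rewrite ?H //=; auto.
- by [].
- by move=> g IH v v' H; rewrite (IH v v').
- by move=> g Ig h Ih v v' H; rewrite (Ig v v') ?(Ih v v'); auto.
- move=> n g IH v v' H; split=> -[a [_ Ha]]; exists a; split=> //.
  + apply/(IH (upd v n a)) => // k fk; rewrite /upd; case: eqP => // /eqP kn.
    by apply: H; split=> //; apply/eqP; rewrite eq_sym.
  + apply/(IH _ (upd v' n a)) => // k fk; rewrite /upd; case: eqP => // /eqP kn.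
    by apply: H; split=> //; apply/eqP; rewrite eq_sym.
Qed.

Lemma sat_onlyx (phi : lform U) v : onlyx phi -> (sat Rel v phi <-> realizes Rel (v 0%N) phi).
Proof. by move=> ox; apply: sat_coinc => k /ox ->. Qed.
End Coinc.

Lemma In_filter (T : Type) (p : pred T) (x : T) (s : seq T) :
  List.In x (seq.filter p s) <-> List.In x s /\ p x.
Proof.
elim: s => [|y s IH] /=; first by split=> [[]|[[]]].
case py: (p y) => /=; rewrite IH.
- by split=> [[<-|[? ?]]|[[<-|?] ?]]; auto.
- split=> [[? ?]|[[e|?] px]]; [by auto| |by auto].
  by subst; rewrite py in px.
Qed.

Section Ehren.
Variables (U : Type) (Rel : U -> U -> Prop).
Hypothesis hsym : forall a b, Rel a b -> Rel b a.
Hypothesis hirr : forall a, ~ Rel a a.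
Hypothesis hext : forall A B : list U, (forall a, List.In a A -> ~ List.In a B) ->
     exists c, ~ List.In c A /\ ~ List.In c B /\
       (forall a, List.In a A -> Rel c a) /\ (forall b, List.In b B -> ~ Rel c b).
Variables (Pt : Type) (Ps : seq Pt) (r : bool).

Definition tev (j : Pt -> U) (v : nat -> U) (t : term Pt) : U :=
  match t with TVar n => v n | TPar q => j q end.
Definition relt (V : seq nat) (t : term Pt) : Prop :=
  match t with TVar n => List.In n V | TPar q => List.In q Ps end.
Definition compat j j' V v v' := forall t s, relt V t -> relt V s ->
  (tev j v t = tev j v s <-> tev j' v' t = tev j' v' s) /\
  (r -> (Rel (tev j v t) (tev j v s) <-> Rel (tev j' v' t) (tev j' v' s))).

Lemma compat_sym j j' V v v' : compat j j' V v v' -> compat j' j V v' v.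
Proof.
move=> C t s Ht Hs; have [C1 C2] := C t s Ht Hs; split; first by rewrite C1.
by move=> rr; rewrite C2.
Qed.

Definition oldts n V : seq (term Pt) :=
  map (fun k => TVar k) (seq.filter (fun k => k != n) V) ++ map (fun q => TPar q) Ps.

Lemma oldtsP n V t : List.In t (oldts n V) <-> relt V t /\ t <> TVar n.
Proof.
rewrite /oldts In_cat !In_map; split.
- case=> [[k [/In_filter [kV kn] <-]]|[q [qP <-]]] //=; split=> // -[] kn'.
  by rewrite kn' eqxx in kn.
- case: t => [k|q] /= [H1 H2]; [left|right].
  + by exists k; split=> //; apply/In_filter; split=> //; apply/eqP => kn; apply: H2; rewrite kn.
  + by exists q.
Qed.

Definition good j j' n V v v' (a a' : U) := forall s, List.In s (oldts n V) ->
  (a = tev j v s <-> a' = tev j' v' s) /\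
  (r -> (Rel a (tev j v s) <-> Rel a' (tev j' v' s))).

Lemma relt_cons n V t : relt (n :: V) t -> t = TVar n \/ List.In t (oldts n V).
Proof.
case: t => [k|q] /=.
- case=> [->|kV]; first by left.
  have [->|kn] := eqVneq k n; first by left.
  by right; apply/oldtsP; split=> // -[] /eqP; rewrite (negbTE kn).
- by move=> qP; right; apply/oldtsP.
Qed.

Lemma tev_old' j v n a V t : List.In t (oldts n V) -> tev j (upd v n a) t = tev j v t.
Proof.
move/oldtsP=> [_]; case: t => //= k kn; rewrite /upd; case: eqP => // e.
by case: kn; rewrite e.
Qed.

Arguments tev_old' j v n a {V t}.

Lemma good_compat j j' n V v v' a a' : compat j j' V v v' -> good j j' n V v v' a a' ->
  compat j j' (n :: V) (upd v n a) (upd v' n a').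
Proof.
move=> C G t s /relt_cons Ht /relt_cons Hs.
case: Ht => [->|Ht]; case: Hs => [->|Hs].
- by rewrite /= /upd eqxx; split=> //; split=> HH; [case: (hirr _ HH)|case: (hirr _ HH)].
- rewrite (tev_old' j v n a Hs) (tev_old' j' v' n a' Hs) /= /upd !eqxx.
  exact: G.
- rewrite (tev_old' j v n a Ht) (tev_old' j' v' n a' Ht) /= /upd !eqxx.
  have [G1 G2] := G t Ht; split.
  + by split=> e; apply/esym/G1; rewrite e.
  + by move=> rr; split=> /hsym H; apply: hsym; apply/(G2 rr).
- rewrite (tev_old' j v n a Ht) (tev_old' j' v' n a' Ht) (tev_old' j v n a Hs) (tev_old' j' v' n a' Hs).
  by apply: C; [case/oldtsP: Ht|case/oldtsP: Hs].
Qed.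

Lemma compat_ext j j' V v v' n a : compat j j' V v v' ->
  exists a', good j j' n V v v' a a'.
Proof.
move=> C.
have reltO t : List.In t (oldts n V) -> relt V t by case/oldtsP.
have [[t0 [Ht0 e0]]|nE] := pselect (exists t0, List.In t0 (oldts n V) /\ tev j v t0 = a).
  exists (tev j' v' t0) => s Hs; have [C1 C2] := C t0 s (reltO _ Ht0) (reltO _ Hs).
  by rewrite -e0; split.
pose OT := oldts n V.
pose pr := fun t => `[< r /\ Rel a (tev j v t) >].
pose A' := map (tev j' v') (seq.filter pr OT).
pose B' := map (tev j' v') (seq.filter (fun t => ~~ pr t) OT).
have dAB : forall x, List.In x A' -> ~ List.In x B'.
  move=> x /In_map [t1 [/In_filter [H1 p1] <-]] /In_map [t2 [/In_filter [H2 p2] e]].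
  have [C1 _] := C t1 t2 (reltO _ H1) (reltO _ H2).
  move/esym: e => /C1 e; move: p2; rewrite /pr -e -/(pr t1) p1 //.
have [a' [nA [nB [RA RB]]]] := hext A' B' dAB.
exists a' => s Hs; split.
- split=> e; first by case: nE; exists s.
  case Hp: (pr s).
  + by case: nA; apply/In_map; exists s; split=> //; apply/In_filter.
  + by case: nB; apply/In_map; exists s; split=> //; apply/In_filter; rewrite Hp.
- move=> rr; split=> H.
  + apply: RA; apply/In_map; exists s; split=> //; apply/In_filter; split=> //.
    by apply/asboolP.
  + case Hp: (pr s).
    * by move: Hp => /asboolP [].
    * by case: (RB (tev j' v' s)) => //; apply/In_map; exists s; split=> //;
        apply/In_filter; rewrite Hp.
Qed.

Arguments compat_sym {j j' V v v'}.
Arguments good_compat {j j' n V v v' a a'}.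
Arguments compat_ext {j j' V v v'}.

Lemma teval_tmap j v (t : term Pt) : teval v (tmap j t) = tev j v t.
Proof. by case: t. Qed.

Lemma sat_compat j j' (phi : lform Pt) : forall V v v',
  (forall k, free k phi -> List.In k V) ->
  params_in (fun q => List.In q Ps) phi ->
  (r = false -> no_rel phi) ->
  compat j j' V v v' ->
  (sat Rel v (fmap j phi) <-> sat Rel v' (fmap j' phi)).
Proof.
rewrite /sat; elim: phi j j' => /=.
- move=> t s j j' V v v' Hf [Pt1 Pt2] Hr C; rewrite !teval_tmap.
  have rr : r by case: r Hr => // /(_ erefl).
  have Ht : relt V t by case: t Hf Pt1 => //= k Hf _; apply: Hf; left.
  have Hs : relt V s by case: s Hf Pt2 => //= k Hf _; apply: Hf; right.
  exact: ((C t s Ht Hs).2 rr).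
- move=> t s j j' V v v' Hf [Pt1 Pt2] Hr C; rewrite !teval_tmap.
  have Ht : relt V t by case: t Hf Pt1 => //= k Hf _; apply: Hf; left.
  have Hs : relt V s by case: s Hf Pt2 => //= k Hf _; apply: Hf; right.
  exact: ((C t s Ht Hs).1).
- by [].
- move=> g IH j j' V v v' Hf Hp Hr C.
  by rewrite (IH j j' V v v').
- move=> g Ig h Ih j j' V v v' Hf [Hp1 Hp2] Hr C.
  rewrite (Ig j j' V v v') ?(Ih j j' V v v') //.
  + by move=> k fk; apply: Hf; right.
  + by move=> /Hr [].
  + by move=> k fk; apply: Hf; left.
  + by move=> /Hr [].
- move=> n g IH j j' V v v' Hf Hp Hr C.
  have Hf' : forall k, free k g -> List.In k (n :: V).
    move=> k fk; have [->|kn] := eqVneq n k; first by left.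
    by right; apply: Hf; split=> //; apply/eqP.
  split=> -[a [_ Ha]].
  + have [a' G] := compat_ext n a C.
    exists a'; split=> //; apply/(IH j j' (n :: V) (upd v n a) (upd v' n a')) => //.
    exact: (good_compat C G).
  + have [a' G] := compat_ext n a (compat_sym C).
    exists a'; split=> //; apply/(IH j j' (n :: V) (upd v n a') (upd v' n a)) => //.
    exact: (compat_sym (good_compat (compat_sym C) G)).
Qed.
End Ehren.

Section Derived.
Variables (U : Type) (Rel : U -> U -> Prop).
Hypothesis hsym : forall a b, Rel a b -> Rel b a.
Hypothesis hirr : forall a, ~ Rel a a.
Hypothesis hext : forall A B : list U, (forall a, List.In a A -> ~ List.In a B) ->
     exists c, ~ List.In c A /\ ~ List.In c B /\
       (forall a, List.In a A -> Rel c a) /\ (forall b, List.In b B -> ~ Rel c b).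

Definition supp (S : set U) (X : set U) := forall c c', ~ S c -> ~ S c' ->
  (forall s, S s -> (Rel c s <-> Rel c' s)) -> X c -> X c'.

Lemma supp_mono (S S' : set U) X : (forall s, S s -> S' s) -> supp S X -> supp S' X.
Proof.
move=> SS' H c c' nc nc' pat; apply: H; [by move/SS'|by move/SS'|].
by move=> s /SS'; apply: pat.
Qed.

Lemma compat_fresh (r : bool) (Ps0 : seq U) c c' : ~ List.In c Ps0 -> ~ List.In c' Ps0 ->
  (r -> forall s, List.In s Ps0 -> (Rel c s <-> Rel c' s)) ->
  compat U Rel U Ps0 r id id [:: 0%N] (fun _ => c) (fun _ => c').
Proof.
move=> nc nc' pat t s.
case: t => [k|q] /=; case: s => [l|q'] /= Ht Hs.
- split=> //; move=> _; split=> H; [case: (hirr _ H)|case: (hirr _ H)].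
- split; first by split=> e; [case: nc|case: nc']; rewrite e.
  by move=> rr; apply: (pat rr q' Hs).
- split; first by split=> e; [case: nc|case: nc']; rewrite -e.
  by move=> rr; split=> /hsym H; apply: hsym; [exact: (pat rr q Ht).1 H|exact: (pat rr q Ht).2 H].
- by split.
Qed.

Lemma defset_supp phi : onlyx phi ->
  supp (fun s => List.In s (params phi)) (defset Rel phi).
Proof.
move=> ox c c' nc nc' pat Xc.
rewrite /defset /realizes /= in Xc *.
have C : compat U Rel U (params phi) true id id [:: 0%N] (fun _ => c) (fun _ => c').
  by apply: compat_fresh => // _.
have := @sat_compat U Rel hsym hirr hext U (params phi) true id id phi [:: 0%N]
  (fun _ => c) (fun _ => c') _ (@params_inP _ phi) _ C.
rewrite !fmap_id => H; apply/H => //.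
by move=> k /ox ->; left.
Qed.

Lemma norel_uniform E c c' : no_rel E -> onlyx E ->
  ~ List.In c (params E) -> ~ List.In c' (params E) ->
  realizes Rel c E -> realizes Rel c' E.
Proof.
move=> nr ox nc nc' Xc.
rewrite /realizes in Xc *.
have C : compat U Rel U (params E) false id id [:: 0%N] (fun _ => c) (fun _ => c').
  by apply: compat_fresh.
have := @sat_compat U Rel hsym hirr hext U (params E) false id id E [:: 0%N]
  (fun _ => c) (fun _ => c') _ (@params_inP _ E) _ C.
rewrite !fmap_id => H; apply/H => //.
by move=> k /ox ->; left.
Qed.

Definition disj (T N : seq U) := forall x, List.In x T -> ~ List.In x N.

Definition cell (T N : seq U) : set U := [set c | ~ List.In c T /\ ~ List.In c N /\
  (forall t, List.In t T -> Rel c t) /\ (forall n, List.In n N -> ~ Rel c n)].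

Lemma fresh_cell T N (L : seq U) : disj T N -> exists c, cell T N c /\ ~ List.In c L.
Proof.
move=> dTN.
pose B' := N ++ seq.filter (fun x => ~~ `[< List.In x T >]) L.
have dB : forall x, List.In x T -> ~ List.In x B'.
  move=> x xT /In_cat [/(dTN _ xT)//|/In_filter [_]].
  by move/negP; apply; apply/asboolP.
have [c [nT [nB [RT RB]]]] := hext _ _ dB.
exists c; split.
- split=> //; split; first by move=> cN; apply: nB; apply/In_cat; left.
  split=> // n nN; apply: RB; apply/In_cat; left.
  exact: nN.
- move=> cL; have [cT|cT] := pselect (List.In c T); first by [].
  apply: nB; apply/In_cat; right; apply/In_filter; split=> //.
  by apply/negP => /asboolP.
Qed.

End Derived.

Section Types.
Variables (U : Type) (Rel : U -> U -> Prop) (M : set U).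

Lemma LxM_neg phi : LxM M phi -> LxM M (FNeg phi).
Proof. by []. Qed.

Lemma LxM_and phi psi : LxM M phi -> LxM M psi -> LxM M (FAnd phi psi).
Proof.
move=> [h1 h2] [h3 h4]; split=> //.
by move=> k /= [/h1|/h3].
Qed.

Lemma LxM_top : LxM M (@FTop U).
Proof. by split=> // k. Qed.

Lemma LxM_bigAnd (l : seq (lform U)) : (forall phi, List.In phi l -> LxM M phi) ->
  LxM M (bigAnd l).
Proof.
elim: l => [|phi l IH] H /=; first exact: LxM_top.
apply: LxM_and; first by apply: H; left.
by apply: IH => psi ?; apply: H; right.
Qed.

Lemma LxM_Rx a : M a -> LxM M (Rx a).
Proof. by move=> Ma; split=> [k /= [<-|[]]|]. Qed.

Lemma LxM_nRx a : M a -> LxM M (nRx a).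
Proof. by move=> Ma; split=> [k /= [<-|[]]|]. Qed.

Variable p : set (lform U).
Hypothesis hp : is_type Rel M p.

Lemma typ_neg phi : LxM M phi -> (p (FNeg phi) <-> ~ p phi).
Proof.
move: hp => [hsub [hcomp hfin]] Lphi; split.
- move=> pn pp; have [c Hc] : exists c, forall x, List.In x [:: phi; FNeg phi] -> realizes Rel c x.
    by apply: hfin => psi /= [<-|[<-|[]]].
  by have := Hc (FNeg phi) (or_intror (or_introl erefl)); apply; apply: Hc; left.
- by move=> np; case: (hcomp _ Lphi).
Qed.

Lemma typ_and phi psi : LxM M phi -> LxM M psi -> (p (FAnd phi psi) <-> p phi /\ p psi).
Proof.
move: hp => [hsub [hcomp hfin]] L1 L2; split.
- move=> pa; split.
  + have [//|pn] := hcomp _ L1.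
    have [c Hc] : exists c, forall x, List.In x [:: FAnd phi psi; FNeg phi] -> realizes Rel c x.
    by apply: hfin => x /= [<-|[<-|[]]].
    have := Hc (FNeg phi) (or_intror (or_introl erefl)); case.
    by case: (Hc _ (or_introl erefl)).
  + have [//|pn] := hcomp _ L2.
    have [c Hc] : exists c, forall x, List.In x [:: FAnd phi psi; FNeg psi] -> realizes Rel c x.
    by apply: hfin => x /= [<-|[<-|[]]].
    have := Hc (FNeg psi) (or_intror (or_introl erefl)); case.
    by case: (Hc _ (or_introl erefl)).
- move=> [p1 p2]; have [//|pn] := hcomp _ (@LxM_and phi psi L1 L2).
  have [c Hc] : exists c, forall x, List.In x [:: phi; psi; FNeg (FAnd phi psi)] -> realizes Rel c x.
    by apply: hfin => x /= [<-|[<-|[<-|[]]]].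
  have := Hc _ (or_intror (or_intror (or_introl erefl))); case.
  by split; [apply: Hc; left|apply: Hc; right; left].
Qed.

Lemma typ_top : p FTop.
Proof.
move: hp => [hsub [hcomp hfin]].
have [//|pn] := hcomp _ LxM_top.
have [c Hc] : exists c, forall x, List.In x [:: FNeg FTop] -> realizes Rel c x.
  by apply: hfin => x /= [<-|[]].
by have := Hc _ (or_introl erefl); case => -[].
Qed.

Lemma typ_bigAnd (l : seq (lform U)) : (forall phi, List.In phi l -> LxM M phi) ->
  (p (bigAnd l) <-> forall phi, List.In phi l -> p phi).
Proof.
elim: l => [|phi l IH] H /=; first by split=> // _; exact: typ_top.
rewrite typ_and; first last.
- by apply: LxM_bigAnd => psi ?; apply: H; right.
- by apply: H; left.
rewrite IH; last by move=> psi ?; apply: H; right.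
split=> [[? ?] psi [<-|]|]; auto.
Qed.
End Types.

Section TP.
Variables (U : Type) (Rel : U -> U -> Prop) (M : set U).

Lemma LxM_eq a : M a -> LxM M (FEq vx (TPar a)).
Proof. by move=> Ma; split=> [k /= [<-|[]]|]. Qed.

Lemma tp_Sstar e : ~ M e -> Sstar Rel M (tp Rel M e).
Proof.
move=> nMe; split.
- split; first by move=> phi [].
  split.
  + move=> phi Lphi; have [H|H] := pselect (realizes Rel e phi).
    * by left.
    * by right; split.
  + by move=> l Hl; exists e => phi /Hl [].
- move=> [a [Ma E]].
  have : tp Rel M a (FEq vx (TPar a)) by split; [exact: LxM_eq|].
  rewrite -E => -[_ /= ea]; apply: nMe; rewrite /realizes /sat /= in ea.
  by rewrite ea.
Qed.
End TP.

Section Sub0.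
Variables (U : Type) (Rel : U -> U -> Prop) (n : nat) (i : 'I_n).

Definition st0 (t : term U) : term (U + 'I_n) :=
  match t with
  | TVar 0 => TPar (inr i)
  | TVar k => TVar k
  | TPar u => TPar (inl u)
  end.

Fixpoint sub0 (phi : lform U) : lform (U + 'I_n) :=
  match phi with
  | FRel t s => FRel (st0 t) (st0 s)
  | FEq t s => FEq (st0 t) (st0 s)
  | FFalse => FFalse
  | FNeg g => FNeg (sub0 g)
  | FAnd g h => FAnd (sub0 g) (sub0 h)
  | FEx k g => if k == 0%N then FEx k (fmap inl g) else FEx k (sub0 g)
  end.

Lemma sat_sub0 (a : 'I_n -> U) (phi : lform U) : forall v,
  sat Rel v (fmap (inst a) (sub0 phi)) <-> sat Rel (upd v 0 (a i)) phi.
Proof.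
rewrite /sat; elim: phi => /=.
- by move=> t s v; case: t => [[|k]|u]; case: s => [[|l]|w] /=; rewrite /upd /=.
- by move=> t s v; case: t => [[|k]|u]; case: s => [[|l]|w] /=; rewrite /upd /=.
- by [].
- by move=> g IH v; rewrite IH.
- by move=> g Ig h Ih v; rewrite Ig Ih.
- move=> k g IH v; case: eqP => [->|kn] /=.
  + rewrite fmap_comp (@fmap_ext _ _ _ id) // fmap_id.
    have E d : upd (upd v 0 (a i)) 0 d = upd v 0 d.
      by apply/funext => z; rewrite /upd; case: eqP.
    by split=> -[d [_ Hd]]; exists d; split=> //; rewrite ?E // -E.
  + have E d : upd (upd v k d) 0 (a i) = upd (upd v 0 (a i)) k d.
      apply/funext => z; rewrite /upd; case: eqP => [->|z0]; case: eqP => // zk.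
      by case: kn; rewrite -zk.
    split=> -[d [_ Hd]]; exists d; split=> //.
    * by rewrite -E; apply/IH.
    * by apply/IH; rewrite E.
Qed.

Lemma free_sub0 k (phi : lform U) : free k (sub0 phi) -> k <> 0%N /\ free k phi.
Proof.
elim: phi => /=.
- by case=> [[|k']|u] [[|l]|w] /=; intuition.
- by case=> [[|k']|u] [[|l]|w] /=; intuition.
- by [].
- by [].
- by move=> g Ig h Ih [/Ig|/Ih]; intuition.
- move=> k' g IH; case: eqP => [->|kn] /= [nk fk].
  + by rewrite free_fmap in fk; split=> // e; apply: nk; rewrite e.
  + by have [? ?] := IH fk.
Qed.

Lemma params_sub0 (M : set U) (phi : lform U) : params_in M phi ->
  params_in (@in_M_or_var U n M) (sub0 phi).
Proof.
elim: phi => /=.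
- by case=> [[|k']|u] [[|l]|w] /=.
- by case=> [[|k']|u] [[|l]|w] /=.
- by [].
- by [].
- by move=> g Ig h Ih [? ?]; split; auto.
- move=> k g IH Hp; case: eqP => _ /=; last exact: IH.
  by rewrite params_in_fmap.
Qed.
End Sub0.
Arguments sub0 {U n} i phi.
Arguments sat_sub0 {U Rel n i a phi v}.
Arguments free_sub0 {U} Rel {n i k phi}.
Arguments params_sub0 {U n i M phi}.

Lemma tp_same_type (U : Type) (Rel : U -> U -> Prop) (M : set U) n (a b : 'I_n -> U) i :
  same_type_over Rel M a b -> tp Rel M (a i) = tp Rel M (b i).
Proof.
move=> hst; apply/funext => phi; apply/propext.
rewrite /tp /=; split=> -[[ox pM] re]; split=> //; rewrite /realizes in re *.
- have := hst (sub0 i phi) (fun _ => a i).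
  rewrite sat_sub0 sat_sub0 => H.
  have [] := (H _ (params_sub0 pM)).
    by move=> k /(free_sub0 Rel) [k0 /ox].
  move=> H1 _.
  have E : upd (fun=> a i) 0 (a i) = (fun=> a i) by apply/funext => z; rewrite /upd; case: eqP.
  have Hs := H1 (eq_rect _ (fun v => sat Rel v phi) re _ (esym E)).
  apply: (proj1 (@sat_coinc _ Rel phi _ (fun _ => b i) _) Hs).
  by move=> k /ox ->; rewrite /upd.
- have := hst (sub0 i phi) (fun _ => b i).
  rewrite sat_sub0 sat_sub0 => H.
  have [] := (H _ (params_sub0 pM)).
    by move=> k /(free_sub0 Rel) [k0 /ox].
  move=> _ H2.
  have E : upd (fun=> b i) 0 (b i) = (fun=> b i) by apply/funext => z; rewrite /upd; case: eqP.
  have Hs := H2 (eq_rect _ (fun v => sat Rel v phi) re _ (esym E)).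
  apply: (proj1 (@sat_coinc _ Rel phi _ (fun _ => a i) _) Hs).
  by move=> k /ox ->; rewrite /upd.
Qed.

Definition step {R : realType} (m t : bool) (w x y : R) : R :=
  if m then (if t then x else y) else w * x + (1 - w) * y.

Lemma step_swap {R : realType} m1 t1 w1 m2 t2 w2 (a b c d : R) :
  step m1 t1 w1 (step m2 t2 w2 a b) (step m2 t2 w2 c d) =
  step m2 t2 w2 (step m1 t1 w1 a c) (step m1 t1 w1 b d).
Proof. by case: m1; case: m2; case: t1; case: t2; rewrite /step; ring. Qed.

Lemma step_same {R : realType} m t w (x : R) : step m t w x x = x.
Proof. by case: m; case: t; rewrite /step //; ring. Qed.

Definition indom {U : Type} (T N : seq U) (e : U) : Prop := List.In e T \/ List.In e N.

Section H.
Variables (R : realType) (U : Type) (Rel : U -> U -> Prop) (M : set U).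
Variables (F : TypeSpace Rel M -> R) (W : R -> R -> R).

Definition wt (p : TypeSpace Rel M) (e : U) : R := W (F p) (F (tpT Rel M e)).

Fixpoint h (P : seq U) (X : set U) (T N : seq U) (p : TypeSpace Rel M) : R :=
  match P with
  | [::] => if `[< cell U Rel T N `<=` X >] then 1 else 0
  | e :: P' => if `[< indom T N e >] then h P' X T N p
      else step `[< M e >] `[< p (Rx e) >] (wt p e) (h P' X (e :: T) N p) (h P' X T (e :: N) p)
  end.

Lemma h_ext P X p : forall T N T' N', (forall x, List.In x T <-> List.In x T') ->
  (forall x, List.In x N <-> List.In x N') -> h P X T N p = h P X T' N' p.
Proof.
elim: P => [|e P IH] T N T' N' HT HN /=.
- have -> : cell U Rel T N = cell U Rel T' N'.
    rewrite /cell; apply/seteqP; split=> c /=; firstorder.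
  by [].
- have -> : indom T N e = indom T' N' e by apply/propext; rewrite /indom HT HN.
  case: ifP => _; first exact: IH.
  congr step; apply: IH => //= x; rewrite ?HT ?HN //.
Qed.

Lemma h_swap e1 e2 P X T N p : h (e1 :: e2 :: P) X T N p = h (e2 :: e1 :: P) X T N p.
Proof.
have iT (x y : U) (T0 N0 : seq U) : indom T0 N0 y -> indom (x :: T0) N0 y by rewrite /indom /=; tauto.
have iN (x y : U) (T0 N0 : seq U) : indom T0 N0 y -> indom T0 (x :: N0) y by rewrite /indom /=; tauto.
have nT (x y : U) (T0 N0 : seq U) : x <> y -> ~ indom T0 N0 y -> ~ indom (x :: T0) N0 y by rewrite /indom /=; tauto.
have nN (x y : U) (T0 N0 : seq U) : x <> y -> ~ indom T0 N0 y -> ~ indom T0 (x :: N0) y by rewrite /indom /=; tauto.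
rewrite /=.
have [d1|d1] := pselect (indom T N e1).
- rewrite (asboolT d1).
  have [d2|d2] := pselect (indom T N e2); first by rewrite (asboolT d2).
  by rewrite (asboolF d2) (asboolT (iT e2 _ _ _ d1)) (asboolT (iN e2 _ _ _ d1)).
- rewrite (asboolF d1).
  have [d2|d2] := pselect (indom T N e2).
    by rewrite (asboolT d2) (asboolT (iT e1 _ _ _ d2)) (asboolT (iN e1 _ _ _ d2)).
  have [e|ne] := pselect (e1 = e2); first by subst; rewrite (asboolF d2).
  rewrite (asboolF d2) (asboolF (nT _ _ _ _ ne d2)) (asboolF (nN _ _ _ _ ne d2)).
  have ne' : e2 <> e1 by move=> e; apply: ne.
  rewrite (asboolF (nT _ _ _ _ ne' d1)) (asboolF (nN _ _ _ _ ne' d1)).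
  rewrite step_swap; congr step; congr step; apply: h_ext => x /=; tauto.
Qed.

Lemma h_perm P P' X p : Permutation.Permutation P P' ->
  forall T N, h P X T N p = h P' X T N p.
Proof.
elim=> [|x l l' _ IH|x y l|l l' l'' _ IH1 _ IH2] T N.
- by [].
- by rewrite /= !IH.
- exact: h_swap.
- by rewrite IH1 IH2.
Qed.

Hypothesis hsym : forall a b, Rel a b -> Rel b a.
Hypothesis hirr : forall a, ~ Rel a a.
Hypothesis hext : forall A B : list U, (forall a, List.In a A -> ~ List.In a B) ->
     exists c, ~ List.In c A /\ ~ List.In c B /\
       (forall a, List.In a A -> Rel c a) /\ (forall b, List.In b B -> ~ Rel c b).

Local Notation cell := (cell U Rel).
Local Notation supp := (supp U Rel).
Local Notation disj := (disj U).

Lemma fresh T N L : disj T N -> exists c, cell T N c /\ ~ List.In c L.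
Proof. exact: (@fresh_cell U Rel hext). Qed.
Arguments fresh {T N} L.

Lemma cell_subT x T N : cell (x :: T) N `<=` cell T N.
Proof. by move=> c [c1 [c2 [c3 c4]]]; split; [|split; [|split]] => //= [|t tT];
  [move=> ?; apply: c1; right|apply: c3; right]. Qed.

Lemma cell_subN x T N : cell T (x :: N) `<=` cell T N.
Proof. by move=> c [c1 [c2 [c3 c4]]]; split; [|split; [|split]] => //= [|n nN];
  [move=> ?; apply: c2; right|apply: c4; right]. Qed.

Lemma uniform (S : set U) X T N c c' : supp S X -> (forall s, S s -> indom T N s) ->
  cell T N c -> cell T N c' -> X c -> X c'.
Proof.
move=> sX SD [c1 [c2 [c3 c4]]] [d1 [d2 [d3 d4]]]; apply: sX.
- by move=> /SD [].
- by move=> /SD [].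
- move=> s /SD [sT|sN]; split=> H.
  + exact: d3 _ sT.
  + exact: c3 _ sT.
  + by case: (c4 _ sN).
  + by case: (d4 _ sN).
Qed.
Arguments uniform {S X T N c c'}.

Lemma disj_consT x T N : ~ indom T N x -> disj T N -> disj (x :: T) N.
Proof. by move=> nx dTN y /= [<- yN|/dTN]; [apply: nx; right|]. Qed.
Arguments disj_consT {x T N}.

Lemma disj_consN x T N : ~ indom T N x -> disj T N -> disj T (x :: N).
Proof. by move=> nx dTN y yT /= [ey|/(dTN _ yT)//]; apply: nx; left; rewrite ey. Qed.
Arguments disj_consN {x T N}.

Lemma leaf_base_gen (S : set U) X T N T' N' : supp S X -> (forall s, S s -> indom T N s) ->
  disj T' N' -> cell T' N' `<=` cell T N ->
  `[< cell T' N' `<=` X >] = `[< cell T N `<=` X >].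
Proof.
move=> sX SD d' sub; apply: (congr1 asbool); apply/propext; split; last first.
  by move=> H c /sub /H.
move=> H c cc.
have [c0 [cc0 _]] := fresh [::] d'.
exact: (uniform sX SD (sub _ cc0) cc (H _ cc0)).
Qed.
Arguments leaf_base_gen {S X T N T' N'}.

Lemma h_leaf (S : set U) X Q p : forall T N, supp S X -> (forall s, S s -> indom T N s) ->
  disj T N -> h Q X T N p = (if `[< cell T N `<=` X >] then 1 else 0).
Proof.
elim: Q => [|e Q IH] T N sX SD dTN //=.
case: ifP => [/asboolP de|/asboolP de]; first exact: IH.
rewrite !IH //; last 4 first.
- by move=> s /SD; rewrite /indom /=; tauto.
- exact: disj_consN.
- by move=> s /SD; rewrite /indom /=; tauto.
- exact: disj_consT.
rewrite (leaf_base_gen sX SD (disj_consT de dTN) (@cell_subT e T N)).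
rewrite (leaf_base_gen sX SD (disj_consN de dTN) (@cell_subN e T N)).
exact: step_same.
Qed.
Arguments h_leaf {S X} Q p {T N}.

Lemma h_app (S : set U) X P Q p : forall T N, supp S X ->
  (forall s, S s -> indom T N s \/ List.In s P) ->
  disj T N -> h (P ++ Q) X T N p = h P X T N p.
Proof.
elim: P => [|e P IH] T N sX SD dTN.
- rewrite /= (h_leaf _ _ sX) //; by move=> s /SD [|[]].
- rewrite /=; case: ifP => [/asboolP de|/asboolP de].
    apply: IH => // s /SD [|[<-|]]; tauto.
  congr step; apply: IH => //.
  + by move=> s /SD; rewrite /indom /=; intuition.
  + exact: disj_consT.
  + by move=> s /SD; rewrite /indom /=; intuition.
  + exact: disj_consN.
Qed.

Lemma h_add (S : set U) X Y P p : forall T N, supp S X -> supp S Y ->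
  (forall c, X c -> ~ Y c) ->
  (forall s, S s -> indom T N s \/ List.In s P) ->
  disj T N -> h P (X `|` Y) T N p = h P X T N p + h P Y T N p.
Proof.
elim: P => [|e P IH] T N sX sY dXY SD dTN /=.
- have SD' : forall s, S s -> indom T N s by move=> s /SD [|[]].
  have [c0 [cc0 _]] := fresh [::] dTN.
  have [Xc0|nXc0] := pselect (X c0).
    have HX : cell T N `<=` X by move=> c cc; exact: (uniform sX SD' cc0 cc Xc0).
    rewrite (asboolT HX) (asboolT (subset_trans HX (@subsetUl _ X Y))).
    by rewrite (asboolF (fun H : cell T N `<=` Y => dXY _ Xc0 (H _ cc0))) addr0.
  have [Yc0|nYc0] := pselect (Y c0).
    have HY : cell T N `<=` Y by move=> c cc; exact: (uniform sY SD' cc0 cc Yc0).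
    rewrite (asboolT HY) (asboolT (subset_trans HY (@subsetUr _ X Y))).
    by rewrite (asboolF (fun H : cell T N `<=` X => nXc0 (H _ cc0))) add0r.
  rewrite (asboolF (fun H : cell T N `<=` X => nXc0 (H _ cc0))) (asboolF (fun H : cell T N `<=` Y => nYc0 (H _ cc0))).
  by rewrite (asboolF (fun H : cell T N `<=` X `|` Y => (match H _ cc0 with or_introl a => nXc0 a | or_intror b => nYc0 b end))) addr0.
- case: ifP => [/asboolP de|/asboolP de].
    apply: IH => // s /SD [|[<-|]]; tauto.
  rewrite !IH //; last 4 first.
  + by move=> s /SD; rewrite /indom /=; intuition.
  + exact: disj_consN.
  + by move=> s /SD; rewrite /indom /=; intuition.
  + exact: disj_consT.
  by rewrite /step; case: ifP => _; [case: ifP => _ //|ring].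
Qed.

Lemma h_zero X P p : forall T N, disj T N -> (forall c, cell T N c -> ~ X c) ->
  h P X T N p = 0.
Proof.
elim: P => [|e P IH] T N dTN HX /=.
- have [c0 [cc0 _]] := fresh [::] dTN.
  by rewrite (asboolF (fun H : cell T N `<=` X => HX _ cc0 (H _ cc0))).
- case: ifP => [/asboolP de|/asboolP de]; first exact: IH.
  rewrite !IH ?step_same //.
  + exact: disj_consN.
  + by move=> c /cell_subN; apply: HX.
  + exact: disj_consT.
  + by move=> c /cell_subT; apply: HX.
Qed.

Lemma h_fin X (L : seq U) P p : forall T N, disj T N -> (forall c, X c -> List.In c L) ->
  h P X T N p = 0.
Proof.
elim: P => [|e P IH] T N dTN HX /=.
- have [c0 [cc0 nL]] := fresh L dTN.
  by rewrite (asboolF (fun H : cell T N `<=` X => nL (HX _ (H _ cc0)))).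
- case: ifP => [/asboolP de|/asboolP de]; first exact: IH.
  rewrite !IH ?step_same //.
  + exact: disj_consN.
  + exact: disj_consT.
Qed.

Lemma h_agree X X' P p : forall T N,
  (forall c, ~ indom T N c -> ~ List.In c P -> (X c <-> X' c)) ->
  h P X T N p = h P X' T N p.
Proof.
elim: P => [|e P IH] T N HX /=.
- have -> // : (cell T N `<=` X) = (cell T N `<=` X').
  apply/propext; split=> H c cc.
  + by apply/(HX c) => //; [case: cc => c1 [c2 _] [|]|exact: H].
  + by apply/(HX c) => //; [case: cc => c1 [c2 _] [|]|exact: H].
- case: ifP => [/asboolP de|/asboolP de].
    by apply: IH => c nd nP; apply: HX => // -[|]; [move=> ec; apply: nd; rewrite -ec|].
  congr step; apply: IH => c nd nP; apply: HX.
  + by move=> d; apply: nd; rewrite /indom /= in d *; tauto.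
  + by move=> /= [ec|//]; apply: nd; rewrite /indom /=; tauto.
  + by move=> d; apply: nd; rewrite /indom /= in d *; tauto.
  + by move=> /= [ec|//]; apply: nd; rewrite /indom /=; tauto.
Qed.

Lemma step_bounds m t w (x y : R) : (~~ m -> 0 <= w <= 1) -> 0 <= x <= 1 -> 0 <= y <= 1 ->
  0 <= step m t w x y <= 1.
Proof.
case: m; rewrite /step; first by case: t.
move=> /(_ isT) /andP [w0 w1] /andP [x0 x1] /andP [y0 y1].
apply/andP; split; nra.
Qed.

Lemma h_bounds P X p : (forall e, ~ M e -> 0 <= wt p e <= 1) ->
  forall T N, 0 <= h P X T N p <= 1.
Proof.
move=> Hw; elim: P => [|e P IH] T N /=.
- by case: ifP => _; rewrite ?ler01 ?lexx.
- case: ifP => _ //; apply: step_bounds => // nm; apply: Hw.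
  by move=> Me; move: nm; rewrite (asboolT Me).
Qed.

Lemma prod_eq_In (s : seq U) (f g : U -> R) : (forall x, List.In x s -> f x = g x) ->
  \prod_(x <- s) f x = \prod_(x <- s) g x.
Proof.
elim: s => [|x s IH] H; first by rewrite !big_nil.
by rewrite !big_cons H ?IH //; [move=> y ys; apply: H; right|left].
Qed.

Definition Xk (g : U -> bool) (K : seq U) : set U :=
  [set c | forall e, List.In e K -> (Rel c e <-> g e)].
Definition fac (g : U -> bool) p e : R :=
  if `[< M e >] then (if `[< p (Rx e) >] == g e then 1 else 0)
  else (if g e then wt p e else 1 - wt p e).

Lemma h_compute (g : U -> bool) (K Q : seq U) p : forall T N, List.NoDup Q ->
  (forall e, List.In e Q -> ~ indom T N e) ->
  (forall e, List.In e Q -> List.In e K) ->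
  (forall e, List.In e K -> indom T N e \/ List.In e Q) ->
  (forall t, List.In t T -> g t) -> (forall n, List.In n N -> ~~ g n) ->
  disj T N -> h Q (Xk g K) T N p = \prod_(e <- Q) fac g p e.
Proof.
elim: Q => [|e Q IH] T N nd hQ QK KD gT gN dTN.
- rewrite big_nil /= asboolT // => c [c1 [c2 [c3 c4]]] e eK.
  case: (KD e eK) => [[eT|eN]|[]].
  + by split=> _; [exact: gT|exact: c3].
  + split=> H; first by case: (c4 _ eN).
    by move: (gN _ eN); rewrite H.
- move: nd => /List.NoDup_cons_iff [eQ nd].
  have de := hQ e (or_introl erefl).
  have eK := QK e (or_introl erefl).
  have hQ' (T' N' : seq U) : (forall x, List.In x Q -> indom T' N' x -> indom T N x) ->
      forall x, List.In x Q -> ~ indom T' N' x.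
    by move=> HT x xQ H; apply: (hQ x); [right|exact: HT x xQ H].
  rewrite /= big_cons (asboolF de).
  case ge : (g e).
  + have Z : h Q (Xk g K) T (e :: N) p = 0.
      apply: h_zero; first exact: disj_consN.
      move=> c [_ [_ [_ c4]]] Xc; apply: (c4 e); first by left.
      by apply/(Xc e eK); rewrite ge.
    rewrite Z (IH (e :: T) N) //.
    * by rewrite /step /fac ge; case: (`[< M e >]); case: (`[< p (Rx e) >]) => /=; ring.
    * apply: hQ' => x xQ [/= [ex|xT]|xN]; [by case: eQ; rewrite ex| by left| by right].
    * by move=> x xQ; apply: QK; right.
    * move=> x /KD [[xT|xN]|[ex|xQ]]; [left; left; right|left; right|left; left; left|right] => //.
    * by move=> t /= [<-|/gT]; rewrite ?ge.
    * exact: disj_consT.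
  + have Z : h Q (Xk g K) (e :: T) N p = 0.
      apply: h_zero; first exact: disj_consT.
      move=> c [_ [_ [c3 _]]] Xc; move: (proj1 (Xc e eK) (c3 e (or_introl erefl))).
      by rewrite ge.
    rewrite Z (IH T (e :: N)) //.
    * by rewrite /step /fac ge; case: (`[< M e >]); case: (`[< p (Rx e) >]) => /=; ring.
    * apply: hQ' => x xQ [xT|/= [ex|xN]]; [by left| by case: eQ; rewrite ex| by right].
    * by move=> x xQ; apply: QK; right.
    * move=> x /KD [[xT|xN]|[ex|xQ]]; [left; left|left; right; right|left; right; left|right] => //.
    * by move=> t /= [<-|/gN]; rewrite ?ge.
    * exact: disj_consN.
Qed.

Lemma In_map_ab n (a b : 'I_n -> U) (I : seq 'I_n) i :
  (forall i j, a i = a j <-> b i = b j) ->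
  List.In (a i) (map a I) -> List.In (b i) (map b I).
Proof.
move=> eab /In_map [x [xI e]]; apply/In_map; exists x; split=> //.
by apply/eab.
Qed.

Lemma transfer n (a b : 'I_n -> U) (phi : lform 'I_n) (I J : seq 'I_n) c c' :
  onlyx phi ->
  (forall i j, a i = a j <-> b i = b j) ->
  (forall i j, Rel (a i) (a j) <-> Rel (b i) (b j)) ->
  (forall i, List.In i (params phi) -> exists j, List.In j (I ++ J) /\ a i = a j) ->
  cell (map a I) (map a J) c -> cell (map b I) (map b J) c' ->
  defset Rel (fmap a phi) c -> defset Rel (fmap b phi) c'.
Proof.
move=> ox eab rab inv [c1 [c2 [c3 c4]]] [d1 [d2 [d3 d4]]] Xc.
rewrite /defset /realizes /= in Xc *.
have key j : List.In j (params phi) ->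
    (c = a j <-> c' = b j) /\ (Rel c (a j) <-> Rel c' (b j)).
  move=> /inv [j' [jIJ e]].
  have e' : b j = b j' by apply/eab.
  have aI : List.In j' I -> List.In (a j') (map a I) by move=> ?; apply/In_map; exists j'.
  have aJ : List.In j' J -> List.In (a j') (map a J) by move=> ?; apply/In_map; exists j'.
  have bI : List.In j' I -> List.In (b j') (map b I) by move=> ?; apply/In_map; exists j'.
  have bJ : List.In j' J -> List.In (b j') (map b J) by move=> ?; apply/In_map; exists j'.
  split.
  - split=> ee; exfalso; case/In_cat: jIJ => H.
    + by apply: c1; rewrite ee e; apply: aI.
    + by apply: c2; rewrite ee e; apply: aJ.
    + by apply: d1; rewrite ee e'; apply: bI.
    + by apply: d2; rewrite ee e'; apply: bJ.
  - rewrite e e'; case/In_cat: jIJ => H.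
    + by split=> _; [apply: d3; apply: bI|apply: c3; apply: aI].
    + split=> HH; [by case: (c4 _ (aJ H))|by case: (d4 _ (bJ H))].
have C : compat U Rel 'I_n (params phi) true a b [:: 0%N] (fun _ => c) (fun _ => c').
  move=> t s; case: t => [k|i]; case: s => [l|j] /= Ht Hs.
  - by split=> //; move=> _; split=> H; [case: (hirr _ H)|case: (hirr _ H)].
  - by have [k1 k2] := key j Hs; split=> // _.
  - have [k1 k2] := key i Ht; split.
      by split=> ee; apply/esym/k1; rewrite ee.
    by move=> _; split=> /hsym H; apply: hsym; apply/k2.
  - by split; [exact: eab|move=> _; exact: rab].
have := @sat_compat U Rel hsym hirr hext 'I_n (params phi) true a b phi [:: 0%N]
  (fun _ => c) (fun _ => c') _ (@params_inP _ phi) _ C.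
move=> H; apply/H => //.
by move=> k /ox ->; left.
Qed.
Arguments transfer {n a b phi I J c c'}.

Lemma h_corr n (a b : 'I_n -> U) (phi : lform 'I_n) p (Q : seq 'I_n) :
  onlyx phi ->
  (forall i j, a i = a j <-> b i = b j) ->
  (forall i j, Rel (a i) (a j) <-> Rel (b i) (b j)) ->
  (forall i, M (a i) -> b i = a i) -> (forall i, M (b i) -> a i = b i) ->
  (forall i, tpT Rel M (a i) = tpT Rel M (b i)) ->
  forall I J,
  (forall i, List.In i (params phi) -> List.In i Q \/ exists j, List.In j (I ++ J) /\ a i = a j) ->
  disj (map a I) (map a J) -> disj (map b I) (map b J) ->
  h (map a Q) (defset Rel (fmap a phi)) (map a I) (map a J) p =
  h (map b Q) (defset Rel (fmap b phi)) (map b I) (map b J) p.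
Proof.
move=> ox eab rab Mab Mba tpab.
have eba : forall i j, b i = b j <-> a i = a j by move=> i j; rewrite eab.
have rba : forall i j, Rel (b i) (b j) <-> Rel (a i) (a j) by move=> i j; rewrite rab.
elim: Q => [|i Q IH] I J inv da db /=.
- have inv' : forall i, List.In i (params phi) -> exists j, List.In j (I ++ J) /\ a i = a j.
    by move=> i /inv [[]|].
  have invb : forall i, List.In i (params phi) -> exists j, List.In j (I ++ J) /\ b i = b j.
    by move=> i /inv' [j [jIJ e]]; exists j; split=> //; apply/eab.
  have -> : (cell (map a I) (map a J) `<=` defset Rel (fmap a phi)) =
            (cell (map b I) (map b J) `<=` defset Rel (fmap b phi)).
    apply/propext; split=> H c' cc'.
    + have [c0 [cc0 _]] := fresh [::] da.
      exact: (transfer ox eab rab inv' cc0 cc' (H _ cc0)).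
    + have [c0 [cc0 _]] := fresh [::] db.
      exact: (transfer ox eba rba invb cc0 cc' (H _ cc0)).
  by [].
- have eind : indom (map a I) (map a J) (a i) = indom (map b I) (map b J) (b i).
    apply/propext; rewrite /indom; split=> -[H|H].
    + by left; apply: In_map_ab H.
    + by right; apply: In_map_ab H.
    + by left; apply: In_map_ab H.
    + by right; apply: In_map_ab H.
  rewrite -eind; case: ifP => [/asboolP d|/asboolP d].
    apply: IH => // i' /inv [/= [ei|iQ]|]; [|by left|by right].
    right; rewrite -ei; case: d => /In_map [x [xIJ ex]]; exists x; split=> //;
      apply/In_cat; [left|right] => //.
  have d' : ~ indom (map b I) (map b J) (b i) by rewrite -eind.
  have eM : `[< M (a i) >] = `[< M (b i) >].
    apply: (congr1 asbool); apply/propext; split=> H.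
    + by rewrite (Mab i H).
    + by rewrite (Mba i H).
  have inv2 : forall i', List.In i' (params phi) ->
      List.In i' Q \/ exists j, List.In j ((i :: I) ++ J) /\ a i' = a j.
    move=> i' /inv [/= [ei|iQ]|[j [jIJ e]]]; [|by left|].
    + by right; exists i; split; [left|rewrite ei].
    + by right; exists j; split=> //; right.
  have inv3 : forall i', List.In i' (params phi) ->
      List.In i' Q \/ exists j, List.In j (I ++ i :: J) /\ a i' = a j.
    move=> i' /inv [/= [ei|iQ]|[j [jIJ e]]]; [|by left|].
    + by right; exists i; split; [apply/In_cat; right; left|rewrite ei].
    + right; exists j; split=> //; apply/In_cat; case/In_cat: jIJ => H; [by left|by right; right].
  rewrite eM (IH (i :: I) J) // ?(IH I (i :: J)) //;
    try solve [exact: (disj_consN d') | exact: (disj_consN d) | exact: (disj_consT d') | exact: (disj_consT d)].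
  have [Mb|Mb] := pselect (M (b i)).
  + by rewrite (asboolT Mb) /step (Mba i Mb).
  + by rewrite (asboolF Mb) /step /wt (tpab i).
Qed.
End H.

Lemma sat_bigAnd (U : Type) (Rel : U -> U -> Prop) v (l : seq (lform U)) :
  sat Rel v (bigAnd l) <-> forall phi, List.In phi l -> sat Rel v phi.
Proof.
rewrite /sat; elim: l => [|phi l IH] /=; first by split=> // _ [].
rewrite IH; split=> [[H1 H2] psi [<-|]|H]; auto.
Qed.

Lemma params_bigAnd_cat (U : Type) (l1 l2 : seq (lform U)) :
  params (bigAnd (l1 ++ l2)) = params (bigAnd l1) ++ params (bigAnd l2).
Proof. by elim: l1 => [|phi l IH] //=; rewrite IH catA. Qed.

Lemma params_bigAnd_Rx (U : Type) (A : seq U) : params (bigAnd (map (@Rx U) A)) = A.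
Proof. by elim: A => [|a A IH] //=; rewrite IH. Qed.

Lemma params_bigAnd_nRx (U : Type) (A : seq U) : params (bigAnd (map (@nRx U) A)) = A.
Proof. by elim: A => [|a A IH] //=; rewrite IH. Qed.

Lemma NoDup_cat (T : Type) (l1 l2 : seq T) : List.NoDup l1 -> List.NoDup l2 ->
  (forall x, List.In x l1 -> ~ List.In x l2) -> List.NoDup (l1 ++ l2).
Proof.
elim: l1 => [|x l IH] //= /List.NoDup_cons_iff [nx nl] n2 d.
apply/List.NoDup_cons_iff; split.
- by move/In_cat => [//|]; apply: d; left.
- by apply: IH => // y yl; apply: d; right.
Qed.

Lemma prod01 (R : realType) (T : Type) (s : seq T) (P : T -> Prop) :
  \prod_(x <- s) (if `[< P x >] then 1 else 0 : R) =
  if `[< forall x, List.In x s -> P x >] then 1 else 0.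
Proof.
elim: s => [|x s IH]; first by rewrite big_nil asboolT.
rewrite big_cons IH.
have [Px|nPx] := pselect (P x).
- have E : (forall y, List.In y (x :: s) -> P y) = (forall y, List.In y s -> P y).
    by apply/propext; split=> H y ys; [apply: H; right|case: ys => [<-|]; auto].
  by rewrite (asboolT Px) mul1r E.
- rewrite (asboolF nPx) mul0r asboolF //.
  by move=> H; apply: nPx; apply: H; left.
Qed.

Lemma allIn_cat (T : Type) (Q : T -> Prop) (l1 l2 : seq T) :
  (forall x, List.In x (l1 ++ l2) -> Q x) <->
  (forall x, List.In x l1 -> Q x) /\ (forall x, List.In x l2 -> Q x).
Proof.
split=> [H|[H1 H2] x /In_cat [/H1|/H2] //].
by split=> x xl; apply: H; apply/In_cat; [left|right].
Qed.

Lemma allIn_map (T T' : Type) (f : T -> T') (Q : T' -> Prop) (l : seq T) :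
  (forall x, List.In x (map f l) -> Q x) <-> (forall y, List.In y l -> Q (f y)).
Proof.
split=> [H y yl|H x /In_map [y [yl <-]]]; last exact: H.
by apply: H; apply/In_map; exists y.
Qed.

Section Main.
Variables (R : realType) (U : Type) (Rel : U -> U -> Prop) (M : set U).
Variables (lam : {measure set (TypeSpace Rel M) -> \bar R}) (F : TypeSpace Rel M -> R)
  (W : R -> R -> R).
Hypothesis hT : rado_model Rel.
Hypothesis hlam : is_lambda lam.
Hypothesis hF : measure_iso lam F.
Hypothesis hW : borel_graphon W.

Let hsym : forall a b, Rel a b -> Rel b a := hT.1.
Let hirr : forall a, ~ Rel a a := hT.2.1.
Let hext := hT.2.2.

Local Notation TS := (TypeSpace Rel M).
Local Notation hh := (h R U Rel M F W).
Local Notation S := (SstarT Rel M).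

Lemma mclopen phi : LxM M phi -> measurable (clopenT Rel M phi).
Proof. by move=> L; apply: sub_sigma_algebra; exists phi. Qed.

Lemma SstarE : S = clopenT Rel M FTop.
Proof.
apply/seteqP; split=> p /=.
- by move=> Sp; split=> //; exact: (@typ_top U Rel M p Sp.1).
- by case.
Qed.

Lemma mS : measurable S.
Proof. rewrite SstarE; apply: mclopen; exact: LxM_top. Qed.

Lemma lamS : lam S = 1%E.
Proof.
have := hlam.2 [::] [::] (List.NoDup_nil _) (List.NoDup_nil _) (fun _ x => match x with end)
  (fun _ x => match x with end) (fun _ x => match x with end).
by rewrite /= expr0 -SstarE.
Qed.

Lemma wt_bounds p e : S p -> ~ M e -> 0 <= wt R U Rel M F W p e <= 1.
Proof.
move=> Sp nMe; rewrite /wt.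
have h1 := hF.1 _ Sp; have h2 := hF.1 _ (@tp_Sstar U Rel M e nMe).
exact: hW.2.1.
Qed.

Lemma mwt e : ~ M e -> measurable_fun S (fun p => wt R U Rel M F W p e).
Proof.
move=> nMe; rewrite /wt.
set r := F (tpT Rel M e).
have r01 : `[0, 1]%classic r := hF.1 _ (@tp_Sstar U Rel M e nMe).
have mI : measurable (`[0, 1]%classic `*` `[0, 1]%classic : set (R * R)).
  by apply: measurableX; apply: measurable_itv.
have := hW.2.2; rewrite (measurable_restrictT _ mI) => mWt.
have m1 := measurable_fun_pair1 r mWt.
have m2 := measurableT_comp m1 hF.2.2.2.1.
apply: eq_measurable_fun m2 => p; rewrite inE => Sp /=.
rewrite patchT // inE; split=> //; exact: hF.1.
Qed.

Lemma mh P X : forall T N, measurable_fun S (hh P X T N).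
Proof.
elim: P => [|e P IH] T N /=.
- exact: measurable_cst.
- have [de|de] := pselect (indom T N e); first by rewrite (asboolT de); exact: IH.
  rewrite (asboolF de) /step; have [Me|Me] := pselect (M e); [rewrite (asboolT Me)|rewrite (asboolF Me)].
  + apply: (measurable_fun_if mS).
    * apply: (measurable_fun_bool true).
      rewrite (_ : _ `&` _ = clopenT Rel M (Rx e)); first exact: mclopen (@LxM_Rx U M e Me).
      apply/seteqP; split=> p /=.
      - by move=> [Sp /asboolP H].
      - by move=> [Sp H]; split=> //; apply/asboolP.
    * exact: measurable_funS mS (@subIsetl _ _ _) (IH _ _).
    * exact: measurable_funS mS (@subIsetl _ _ _) (IH _ _).
  + apply: measurable_realfun.measurable_funD; apply: measurable_realfun.measurable_funM => //.
    * exact: mwt.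
    * apply: measurable_realfun.measurable_funB; [exact: measurable_cst|exact: mwt].
Qed.

Lemma hb P X T N p : S p -> 0 <= hh P X T N p <= 1.
Proof. move=> Sp; apply: h_bounds => e nMe; exact: (wt_bounds p e Sp nMe). Qed.
Arguments hb P X T N {p}.

Lemma happ (S0 X : set U) P Q p T N : supp U Rel S0 X ->
  (forall s, S0 s -> indom T N s \/ List.In s P) -> disj U T N ->
  hh (P ++ Q) X T N p = hh P X T N p.
Proof. by move=> H1 H2 H3; apply: (@h_app R U Rel M F W hext S0 X P Q p T N H1 H2 H3). Qed.
Arguments happ {S0 X P} Q p {T N}.

Lemma hadd (S0 X Y : set U) P p T N : supp U Rel S0 X -> supp U Rel S0 Y ->
  (forall c, X c -> ~ Y c) -> (forall s, S0 s -> indom T N s \/ List.In s P) ->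
  disj U T N -> hh P (X `|` Y) T N p = hh P X T N p + hh P Y T N p.
Proof. by move=> H1 H2 H3 H4 H5; apply: (@h_add R U Rel M F W hext S0 X Y P p T N H1 H2 H3 H4 H5). Qed.

Lemma dsupp phi : onlyx phi -> supp U Rel (fun s => List.In s (params phi)) (defset Rel phi).
Proof. by move=> ox; apply: defset_supp. Qed.
Arguments dsupp {phi}.

Lemma disj00 : disj U [::] [::].
Proof. by []. Qed.

Lemma h_swapP P Q X p : hh (P ++ Q) X [::] [::] p = hh (Q ++ P) X [::] [::] p.
Proof. by apply: h_perm; apply: Permutation.Permutation_app_comm. Qed.

Lemma h_inv phi psi p : onlyx phi -> onlyx psi -> defset Rel phi = defset Rel psi ->
  hh (params phi) (defset Rel phi) [::] [::] p = hh (params psi) (defset Rel psi) [::] [::] p.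
Proof.
move=> o1 o2 E.
rewrite -(happ (params psi) p (dsupp o1)) //; last by move=> s; right.
rewrite h_swapP E (happ (params phi) p (dsupp o2)) //.
by move=> s; right.
Qed.

Arguments h_inv {phi psi} p.

Lemma h_addP phi psi p : onlyx phi -> onlyx psi ->
  defset Rel phi `&` defset Rel psi = set0 ->
  hh (params phi ++ params psi) (defset Rel phi `|` defset Rel psi) [::] [::] p =
  hh (params phi) (defset Rel phi) [::] [::] p + hh (params psi) (defset Rel psi) [::] [::] p.
Proof.
move=> o1 o2 D.
have sub1 : forall s, List.In s (params phi) -> List.In s (params phi ++ params psi).
  by move=> s H; apply/In_cat; left.
have sub2 : forall s, List.In s (params psi) -> List.In s (params phi ++ params psi).
  by move=> s H; apply/In_cat; right.
rewrite (@hadd (fun s => List.In s (params phi ++ params psi))) //.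
- rewrite (happ _ p (dsupp o1)) //; last by move=> s; right.
  rewrite h_swapP (happ _ p (dsupp o2)) //.
  by move=> s; right.
- exact: supp_mono sub1 (dsupp o1).
- exact: supp_mono sub2 (dsupp o2).
- by move=> c X1 X2; have : (defset Rel phi `&` defset Rel psi) c by []; rewrite D.
- by move=> s; right.
Qed.

Arguments h_addP {phi psi} p.

Definition mu (phi : lform U) : R :=
  fine (\int[lam]_(p in S) (hh (params phi) (defset Rel phi) [::] [::] p)%:E)%E.

Lemma int_h P X : (\int[lam]_(p in S) (hh P X [::] [::] p)%:E)%E \is a fin_num /\
  (0 <= \int[lam]_(p in S) (hh P X [::] [::] p)%:E)%E.
Proof.
have i0 : (0 <= \int[lam]_(p in S) (hh P X [::] [::] p)%:E)%E.
  by apply: integral_ge0 => p Sp; rewrite lee_fin; case/andP: (hb P X [::] [::] Sp).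
split=> //; rewrite ge0_fin_numE //.
apply: (@le_lt_trans _ _ (\int[lam]_(p in S) (cst 1%:E p))%E); last first.
  by rewrite integral_cst; [rewrite mul1e lamS ltry|exact: mS].
apply: ge0_le_integral => //.
all: try first [exact: mS | exact: (measurable_realfun.measurable_EFinP _ _).2 (mh P X [::] [::]) | exact: measurable_cst | by move=> p Sp; rewrite /= lee_fin; case/andP: (hb P X [::] [::] Sp)].
Qed.

Lemma muE phi : ((mu phi)%:E = \int[lam]_(p in S) (hh (params phi) (defset Rel phi) [::] [::] p)%:E)%E.
Proof. by rewrite /mu fineK //; case: (int_h (params phi) (defset Rel phi)). Qed.

Lemma keisler : keisler_measure Rel mu.
Proof.
split; [|split; [|split]].
- move=> phi psi o1 o2 E; rewrite /mu; congr fine; apply: eq_integral => p _.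
  by rewrite (h_inv p o1 o2 E).
- by move=> phi _; rewrite /mu; apply: fine_ge0; case: (int_h (params phi) (defset Rel phi)).
- rewrite /mu /=.
  have -> : (fun p => (hh [::] (defset Rel FTop) [::] [::] p)%:E) = cst 1%:E.
    apply/funext => p /=; rewrite asboolT //.
    by move=> c _; rewrite /defset /realizes /sat /=.
  by rewrite integral_cst; [rewrite mul1e lamS|exact: mS].
- move=> phi psi o1 o2 D.
  have E : defset Rel (FOr phi psi) = defset Rel phi `|` defset Rel psi.
    apply/seteqP; split=> c; rewrite /defset /realizes /sat /=.
    + by move=> H; apply: contrapT => nH; apply: H; split=> H'; apply: nH; [left|right].
    + by case=> H [H1 H2]; [apply: H1|apply: H2].
  rewrite /mu /= E -fineD; [|by case: (int_h (params phi) (defset Rel phi))|by case: (int_h (params psi) (defset Rel psi))].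
  congr fine.
  under eq_integral => p _ do rewrite (h_addP p o1 o2 D) EFinD.
  apply: ge0_integralD.
  + exact: mS.
  + by move=> p Sp; rewrite lee_fin; case/andP: (hb (params phi) (defset Rel phi) [::] [::] Sp).
  + by apply/measurable_realfun.measurable_EFinP; exact: (mh _ _ [::] [::]).
  + by move=> p Sp; rewrite lee_fin; case/andP: (hb (params psi) (defset Rel psi) [::] [::] Sp).
  + by apply/measurable_realfun.measurable_EFinP; exact: (mh _ _ [::] [::]).
Qed.

Lemma hfin X L P p T N : disj U T N -> (forall c, X c -> List.In c L) -> hh P X T N p = 0.
Proof. by move=> H1 H2; exact: (@h_fin R U Rel M F W hext X L P p T N H1 H2). Qed.

Lemma mu_point a : mu (FEq vx (TPar a)) = 0.
Proof.
rewrite /mu.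
have -> : (fun p => (hh (params (FEq vx (TPar a))) (defset Rel (FEq vx (TPar a))) [::] [::] p)%:E) = cst 0%:E.
  apply/funext => p; rewrite (@hfin _ [:: a]) //.
  by move=> c; rewrite /defset /realizes /sat /= => ->; left.
by rewrite integral0.
Qed.

Lemma hcorr n (a b : 'I_n -> U) (phi : lform 'I_n) p (Q : seq 'I_n) :
  onlyx phi ->
  (forall i j, a i = a j <-> b i = b j) ->
  (forall i j, Rel (a i) (a j) <-> Rel (b i) (b j)) ->
  (forall i, M (a i) -> b i = a i) -> (forall i, M (b i) -> a i = b i) ->
  (forall i, tpT Rel M (a i) = tpT Rel M (b i)) ->
  forall I J,
  (forall i, List.In i (params phi) -> List.In i Q \/ exists j, List.In j (I ++ J) /\ a i = a j) ->
  disj U (map a I) (map a J) -> disj U (map b I) (map b J) ->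
  hh (map a Q) (defset Rel (fmap a phi)) (map a I) (map a J) p =
  hh (map b Q) (defset Rel (fmap b phi)) (map b I) (map b J) p.
Proof.
move=> H1 H2 H3 H4 H5 H6 I J H7 H8 H9.
exact: (@h_corr R U Rel M F W hsym hirr hext n a b phi p Q H1 H2 H3 H4 H5 H6 I J H7 H8 H9).
Qed.

Lemma minv : M_invariant Rel M mu.
Proof.
move=> n phi a b ox hst.
have eab : forall i j, a i = a j <-> b i = b j.
  move=> i j; have := hst (FEq (TPar (inr i)) (TPar (inr j))) (fun _ => a i).
  by rewrite /sat /=; apply => // k [].
have rab : forall i j, Rel (a i) (a j) <-> Rel (b i) (b j).
  move=> i j; have := hst (FRel (TPar (inr i)) (TPar (inr j))) (fun _ => a i).
  by rewrite /sat /=; apply => // k [].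
have Mab : forall i, M (a i) -> b i = a i.
  move=> i Ma; have := hst (FEq (TPar (inr i)) (TPar (inl (a i)))) (fun _ => a i).
  by rewrite /sat /= => H; apply/H => // k [].
have Mba : forall i, M (b i) -> a i = b i.
  move=> i Mb; have := hst (FEq (TPar (inr i)) (TPar (inl (b i)))) (fun _ => a i).
  by rewrite /sat /= => H; apply/H => // k [].
have tpab : forall i, tpT Rel M (a i) = tpT Rel M (b i).
  by move=> i; exact: (@tp_same_type U Rel M n a b i hst).
rewrite /mu; congr fine; apply: eq_integral => p _; congr EFin.
rewrite !params_fmap.
apply: (@hcorr n a b phi p (params phi) ox eab rab Mab Mba tpab [::] [::]) => //.
by move=> i; left.
Qed.

Lemma hagree X X' P p T N : (forall c, ~ indom T N c -> ~ List.In c P -> (X c <-> X' c)) ->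
  hh P X T N p = hh P X' T N p.
Proof. by move=> H; exact: (@h_agree R U Rel M F W X X' P p T N H). Qed.

Lemma hcompute (g : U -> bool) (K Q : seq U) p T N : List.NoDup Q ->
  (forall e, List.In e Q -> ~ indom T N e) ->
  (forall e, List.In e Q -> List.In e K) ->
  (forall e, List.In e K -> indom T N e \/ List.In e Q) ->
  (forall t, List.In t T -> g t) -> (forall n, List.In n N -> ~~ g n) ->
  disj U T N -> hh Q (Xk U Rel g K) T N p = \prod_(e <- Q) fac R U Rel M F W g p e.
Proof.
move=> H1 H2 H3 H4 H5 H6 H7.
exact: (@h_compute R U Rel M F W hext g K Q p T N H1 H2 H3 H4 H5 H6 H7).
Qed.

Lemma basicP A B C D E : basic_data M A B C D E ->
  (mu (basic A B C D E))%:E = muW_basic lam F W A B C D E.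
Proof.
move=> [nA [nB [dAB [MA [MB [nC [nD [dCD [MC [MD [nrE oxE]]]]]]]]]]].
rewrite /muW_basic.
pose K := A ++ B ++ C ++ D.
have Dbas : forall c, defset Rel (basic A B C D E) c <->
    [/\ (forall a, List.In a A -> Rel c a), (forall b, List.In b B -> ~ Rel c b),
        (forall x, List.In x C -> Rel c x), (forall d, List.In d D -> ~ Rel c d) &
        realizes Rel c E].
  move=> c; rewrite /defset /realizes /= /basic sat_bigAnd !allIn_cat !allIn_map.
  rewrite /sat /=; split.
  - by move=> [H1 [H2 [H3 [H4 H5]]]]; split=> //; apply: H5; left.
  - move=> [H1 H2 H3 H4 H5]; split=> //; split=> //; split=> //; split=> //.
    by move=> x [<-|[]].
have realE : forall c, realizes Rel c (basic A B C D E) -> realizes Rel c E.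
  by move=> c /Dbas [].
have [tr|ntr] := pselect (trivial_eq Rel E).
  rewrite asboolT //; case: tr => L HL; rewrite /mu.
  have -> : (fun p => (hh (params (basic A B C D E)) (defset Rel (basic A B C D E)) [::] [::] p)%:E) = cst 0%:E.
    by apply/funext => p; rewrite (@hfin _ L) // => c /realE; exact: HL.
  by rewrite integral0.
rewrite asboolF // muE; apply: eq_integral => p; rewrite inE => Sp; congr EFin.
have [c0 [Ec0 nc0]] : exists c0, realizes Rel c0 E /\ ~ List.In c0 (params E).
  apply: contrapT => H; apply: ntr; exists (params E) => c Ec; apply: contrapT => nc.
  by apply: H; exists c.
have Eall : forall c, ~ List.In c (params E) -> realizes Rel c E.
  by move=> c nc; exact: (@norel_uniform U Rel hsym hirr hext E c0 c nrE oxE nc0 nc Ec0).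
pose g := fun e => `[< List.In e A \/ List.In e C >].
have gA : forall a, List.In a A -> g a = true by move=> a aA; apply/asboolP; left.
have gC : forall a, List.In a C -> g a = true by move=> a aA; apply/asboolP; right.
have gB : forall a, List.In a B -> g a = false.
  move=> b bB; apply/asboolP => -[bA|bC]; first exact: (dAB b bA).
  by apply: (MC b bC); apply: MB.
have gD : forall a, List.In a D -> g a = false.
  move=> d dD; apply/asboolP => -[dA|dC]; last exact: (dCD d dC).
  by apply: (MD d dD); apply: MA.
have Pb : params (basic A B C D E) = K ++ (params E ++ [::]).
  rewrite /basic /K !params_bigAnd_cat params_bigAnd_Rx params_bigAnd_nRx.
  by rewrite params_bigAnd_Rx params_bigAnd_nRx /= -!catA.
have XkE : forall c, Xk U Rel g K c <->
    [/\ (forall a, List.In a A -> Rel c a), (forall b, List.In b B -> ~ Rel c b),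
        (forall x, List.In x C -> Rel c x) & (forall d, List.In d D -> ~ Rel c d)].
  move=> c; rewrite /Xk /K /= !allIn_cat; split.
  - move=> [H1 [H2 [H3 H4]]]; split.
    + by move=> a aA; apply/(H1 a aA); rewrite gA.
    + by move=> b bB Rb; move: (proj1 (H2 b bB) Rb); rewrite gB.
    + by move=> a aA; apply/(H3 a aA); rewrite gC.
    + by move=> b bB Rb; move: (proj1 (H4 b bB) Rb); rewrite gD.
  - move=> [H1 H2 H3 H4]; split; [|split; [|split]].
    + by move=> a aA; rewrite gA //; split=> // _; apply: H1.
    + by move=> a aA; rewrite gB //; split=> // Hc; case: (H2 a aA Hc).
    + by move=> a aA; rewrite gC //; split=> // _; apply: H3.
    + by move=> a aA; rewrite gD //; split=> // Hc; case: (H4 a aA Hc).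
rewrite (@hagree _ (Xk U Rel g K)); last first.
  move=> c _; rewrite Pb => ncP.
  have ncE : ~ List.In c (params E).
    by move=> H; apply: ncP; apply/In_cat; right; apply/In_cat; left.
  split=> [/Dbas [H1 H2 H3 H4 _]|/XkE [H1 H2 H3 H4]]; first by apply/XkE; split.
  by apply/Dbas; split=> //; apply: Eall.
have Xsupp : supp U Rel (fun s => List.In s K) (Xk U Rel g K).
  move=> c c' _ _ pat H e eK; split=> [Hc'|ge].
  - by apply/(H e eK); apply/(pat e eK).
  - by apply/(pat e eK); apply/(H e eK).
rewrite Pb (happ (params E ++ [::]) p Xsupp) //; last by move=> s'; right.
have ndK : List.NoDup K.
  apply: NoDup_cat => //.
    apply: NoDup_cat => //.
      apply: NoDup_cat => //.
    move=> x xB /In_cat [xC|xD]; [exact: (MC x xC (MB x xB))|exact: (MD x xD (MB x xB))].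
  move=> x xA /In_cat [xB|/In_cat [xC|xD]].
  - exact: (dAB x xA xB).
  - exact: (MC x xC (MA x xA)).
  - exact: (MD x xD (MA x xA)).
rewrite (hcompute g K K p [::] [::] ndK) //; last first.
- by move=> e eK; right.
- by move=> e _ [].
have hp : is_type Rel M p := Sp.1.
have pA : \prod_(a <- A) fac R U Rel M F W g p a =
    if `[< forall a, List.In a A -> p (Rx a) >] then 1 else 0.
  rewrite -(@prod01 R U A (fun a => p (Rx a))); apply: (@prod_eq_In R U) => a aA.
  by rewrite /fac (asboolT (MA a aA)) gA // eqb_id.
have pB : \prod_(b <- B) fac R U Rel M F W g p b =
    if `[< forall b, List.In b B -> ~ p (Rx b) >] then 1 else 0.
  rewrite -(@prod01 R U B (fun b => ~ p (Rx b))); apply: (@prod_eq_In R U) => b bB.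
  by rewrite /fac (asboolT (MB b bB)) gB // eqbF_neg asbool_neg.
have pC : \prod_(x <- C) fac R U Rel M F W g p x = \prod_(x <- C) W (F p) (F (tpT Rel M x)).
  apply: (@prod_eq_In R U) => x xC.
  by rewrite /fac (asboolF (MC x xC)) gC.
have pD : \prod_(x <- D) fac R U Rel M F W g p x = \prod_(x <- D) (1 - W (F p) (F (tpT Rel M x))).
  apply: (@prod_eq_In R U) => x xD.
  by rewrite /fac (asboolF (MD x xD)) gD.
have LL : forall phi, List.In phi ([seq Rx i | i <- A] ++ [seq nRx i | i <- B]) -> LxM M phi.
  move=> phi /In_cat [/In_map [a [aA <-]]|/In_map [b [bB <-]]].
  - exact: (@LxM_Rx U M a (MA a aA)).
  - exact: (@LxM_nRx U M b (MB b bB)).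
have clo : clopenT Rel M (bigAnd ([seq Rx i | i <- A] ++ [seq nRx i | i <- B])) p <->
    (forall a, List.In a A -> p (Rx a)) /\ (forall b, List.In b B -> ~ p (Rx b)).
  rewrite /clopenT /clopen /=; split.
  - move=> [_ H]; have H' := (@typ_bigAnd U Rel M p hp _ LL).1 H.
    split.
    + by move=> a aA; apply: H'; apply/In_cat; left; apply/In_map; exists a.
    + move=> b bB; apply/(@typ_neg U Rel M p hp _ (@LxM_Rx U M b (MB b bB))).
      by apply: H'; apply/In_cat; right; apply/In_map; exists b.
  - move=> [HA HB]; split=> //; apply/(@typ_bigAnd U Rel M p hp _ LL).
    move=> phi /In_cat [/In_map [a [aA <-]]|/In_map [b [bB <-]]]; first exact: HA.
    by apply/(@typ_neg U Rel M p hp _ (@LxM_Rx U M b (MB b bB))); apply: HB.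
have ind : \1_(clopenT Rel M (bigAnd ([seq Rx i | i <- A] ++ [seq nRx i | i <- B]))) p =
    (if `[< forall a, List.In a A -> p (Rx a) >] then 1 else 0) *
    (if `[< forall b, List.In b B -> ~ p (Rx b) >] then 1 else 0) :> R.
  rewrite indicE.
  have [HA|HA] := pselect (forall a, List.In a A -> p (Rx a));
  have [HB|HB] := pselect (forall b, List.In b B -> ~ p (Rx b)).
  - by rewrite (asboolT HA) (asboolT HB) mem_set ?mulr1 //; apply/clo.
  - by rewrite (asboolT HA) (asboolF HB) memNset ?mulr0 // => /clo [].
  - by rewrite (asboolF HA) (asboolT HB) memNset ?mulr0 ?mul0r // => /clo [].
  - by rewrite (asboolF HA) (asboolF HB) memNset ?mulr0 // => /clo [].
by rewrite /K !big_cat pA pB pC pD ind -!mulrA.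
Qed.
End Main.


Theorem proposition4p17 (R : realType) (U : Type) (Rel : U -> U -> Prop)
  (M : set U)
  (hT : rado_model Rel) (hsat : saturated Rel)
  (hMc : countable M) (hMU : elementary_sub Rel M)
  (lam : {measure set (TypeSpace Rel M) -> \bar R}) (hlam : is_lambda lam)
  (F : TypeSpace Rel M -> R) (hF : measure_iso lam F)
  (W : R -> R -> R) (hW : borel_graphon W) :
  exists mu : lform U -> R,
    (forall A B C D E, basic_data M A B C D E ->
       (mu (basic A B C D E))%:E = muW_basic lam F W A B C D E) /\
    keisler_measure Rel mu /\
    M_invariant Rel M mu /\
    (forall a : U, mu (FEq vx (TPar a)) = 0).
Proof.
exists (@mu R U Rel M lam F W); split; [|split; [|split]].
- by move=> A B C D E bd; apply: basicP.
- exact: keisler.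
- exact: minv.
- by move=> a; apply: mu_point.
Qed.
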